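(* Let $n\ge3$ and $\alpha\in[0,1]$. Then \[ \rho(A_\alpha(P_n))\le\begin{cases}2\alpha+2(1-\alpha)\cos\left(\frac{\pi}{n+1}\right), & 0\le\alpha<1/2,\\[2pt] 2\alpha+2(1-\alpha)\cos\left(\frac{\pi}{n}\right), & 1/2\le\alpha\le1.\end{cases} \] Equality holds if and only if $\alpha\in\{0,1/2,1\}$.
   Context: $P_n$ is the path on $n$ vertices. For a graph $G$, $A(G)$ is the adjacency matrix, $D(G)$ the diagonal degree matrix, and $A_\alpha(G)=\alpha D(G)+(1-\alpha)A(G)$; $\rho(M)$ is the largest eigenvalue of a real symmetric matrix $M$. *)

(* Defs.v *)
From Stdlib Require Import Reals Lra Lia Arith.
Open Scope R_scope.

Fixpoint rsum (n : nat) (f : nat -> R) : R :=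
  match n with
  | O => 0
  | S k => rsum k f + f k
  end.

(* An n x n real matrix is represented by its entries M i j for i, j < n
   (vertices / indices are 0, ..., n-1). *)

Definition path_adj (i j : nat) : R :=
  if orb (Nat.eqb (S i) j) (Nat.eqb (S j) i) then 1 else 0.

Definition deg_mx (n : nat) (A : nat -> nat -> R) (i j : nat) : R :=
  if Nat.eqb i j then rsum n (fun k => A i k) else 0.

Definition A_alpha (n : nat) (alpha : R) (A : nat -> nat -> R) (i j : nat) : R :=
  alpha * deg_mx n A i j + (1 - alpha) * A i j.

Definition eigenvalue (n : nat) (M : nat -> nat -> R) (l : R) : Prop :=
  exists x : nat -> R,
    (exists i, (i < n)%nat /\ x i <> 0) /\
    forall i, (i < n)%nat -> rsum n (fun j => M i j * x j) = l * x i.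

Definition is_rho (n : nat) (M : nat -> nat -> R) (r : R) : Prop :=
  eigenvalue n M r /\ forall l, eigenvalue n M l -> l <= r.

(* Main.v *)
Require Import Defs.
From Stdlib Require Import Reals Lra Lia Arith Classical.
Open Scope R_scope.

Lemma rsum_ext n f g : (forall j, (j < n)%nat -> f j = g j) -> rsum n f = rsum n g.
Proof. induction n; simpl; intros H; [reflexivity|]. rewrite IHn by (intros; apply H; lia). rewrite H by lia. reflexivity. Qed.

Lemma rsum_plus n f g : rsum n (fun j => f j + g j) = rsum n f + rsum n g.
Proof. induction n; simpl; [lra|]. rewrite IHn; lra. Qed.

Lemma rsum_scal n c f : rsum n (fun j => c * f j) = c * rsum n f.
Proof. induction n; simpl; [lra|]. rewrite IHn; lra. Qed.

Lemma rsum_ind n a c : rsum n (fun j => if Nat.eqb j a then c else 0) = if Nat.ltb a n then c else 0.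
Proof.
  induction n; simpl; [reflexivity|]. rewrite IHn.
  destruct (Nat.eqb_spec n a); destruct (Nat.ltb_spec a n); destruct (Nat.ltb_spec a (S n)); try lia; lra.
Qed.

Lemma rsum_le n f g : (forall j, (j < n)%nat -> f j <= g j) -> rsum n f <= rsum n g.
Proof. induction n; simpl; intros H; [lra|]. specialize (IHn (fun j Hj => H j ltac:(lia))). specialize (H n ltac:(lia)). lra. Qed.

Lemma rsum_lt n f g i0 : (i0 < n)%nat -> (forall j, (j < n)%nat -> f j <= g j) -> f i0 < g i0 -> rsum n f < rsum n g.
Proof. induction n; simpl; intros Hi H Hs; [lia|].
  destruct (Nat.eq_dec i0 n).
  - subst. pose proof (rsum_le n f g (fun j Hj => H j ltac:(lia))). lra.
  - specialize (IHn ltac:(lia) (fun j Hj => H j ltac:(lia)) Hs). specialize (H n ltac:(lia)). lra.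
Qed.

Lemma rsum_pos n f : (0 < n)%nat -> (forall j, (j < n)%nat -> 0 < f j) -> 0 < rsum n f.
Proof. intros Hn H. replace 0 with (rsum n (fun _ => 0)).
  apply (rsum_lt n _ _ 0); auto. intros; left; auto.
  clear. induction n; simpl; lra. Qed.

Lemma rsum_shift k f : rsum (S k) f = f O + rsum k (fun i => f (S i)).
Proof. induction k; simpl in *; [lra|]. rewrite IHk; lra. Qed.

Definition Lf (x : nat -> R) (i : nat) : R := match i with O => 0 | S k => x k end.
Definition Rf (n : nat) (x : nat -> R) (i : nat) : R := if Nat.ltb (S i) n then x (S i) else 0.
Definition degp (n i : nat) : R := Lf (fun _ => 1) i + Rf n (fun _ => 1) i.
Definition T (n : nat) (d : nat -> R) (m : R) (x : nat -> R) (i : nat) : R :=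
  d i * x i + m * Lf x i + m * Rf n x i.

Lemma adj_row n x i : (i < n)%nat -> rsum n (fun j => path_adj i j * x j) = Lf x i + Rf n x i.
Proof.
  intros Hi.
  transitivity (rsum n (fun j => (if Nat.eqb j (S i) then x (S i) else 0) +
     (if Nat.eqb j (pred i) then (if Nat.eqb i 0 then 0 else x (pred i)) else 0))).
  - apply rsum_ext; intros j Hj. unfold path_adj.
    destruct (Nat.eqb_spec (S i) j); destruct (Nat.eqb_spec (S j) i);
    destruct (Nat.eqb_spec j (S i)); destruct (Nat.eqb_spec j (pred i)); destruct (Nat.eqb_spec i 0);
    simpl; subst; try lia; try lra; simpl; try lra.
  - rewrite rsum_plus, !rsum_ind. unfold Lf, Rf.
    destruct i; simpl; repeat match goal with |- context[Nat.ltb ?a ?b] => destruct (Nat.ltb_spec a b) end; try lia; lra.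
Qed.

Lemma row_lemma n alpha x i : (i < n)%nat ->
  rsum n (fun j => A_alpha n alpha path_adj i j * x j) =
  T n (fun i => alpha * degp n i) (1 - alpha) x i.
Proof.
  intros Hi. unfold A_alpha, deg_mx.
  transitivity (rsum n (fun j => alpha * (if Nat.eqb j i then degp n i * x i else 0) + (1 - alpha) * (path_adj i j * x j))).
  - apply rsum_ext; intros j Hj. destruct (Nat.eqb_spec i j); destruct (Nat.eqb_spec j i); try lia.
    + subst. unfold degp. rewrite <- adj_row by auto.
      replace (rsum n (fun k => path_adj j k)) with (rsum n (fun k => path_adj j k * 1)). lra.
      apply rsum_ext; intros; lra.
    + lra.
  - rewrite rsum_plus, !rsum_scal, rsum_ind, adj_row by auto.
    destruct (Nat.ltb_spec i n); try lia. unfold T. lra.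
Qed.

Lemma argmax n f g : (0 < n)%nat -> (forall j, (j < n)%nat -> 0 < g j) ->
  exists i0, (i0 < n)%nat /\ forall j, (j < n)%nat -> f j * g i0 <= f i0 * g j.
Proof.
  induction n; intros Hn Hg; [lia|].
  destruct n.
  - exists O; split; [lia|]. intros j Hj. replace j with O by lia. lra.
  - destruct IHn as [i0 [Hi0 H]]; [lia| intros; apply Hg; lia|].
    destruct (Rle_dec (f (S n) * g i0) (f i0 * g (S n))).
    + exists i0; split; [lia|]. intros j Hj. destruct (Nat.eq_dec j (S n)); [subst; auto|]. apply H; lia.
    + exists (S n); split; [lia|]. intros j Hj. destruct (Nat.eq_dec j (S n)); [subst; lra|].
      specialize (H j ltac:(lia)). pose proof (Hg i0 ltac:(lia)). pose proof (Hg j ltac:(lia)).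
      pose proof (Hg (S n) ltac:(lia)).
      assert (f j * g (S n) * g i0 <= f (S n) * g j * g i0).
      { apply Rle_trans with (f i0 * g j * g (S n)). nra. nra. }
      apply Rmult_le_reg_r with (g i0); auto.
Qed.

Lemma bound_lemma n d m v beta l x :
  (forall i, (i < n)%nat -> 0 <= d i) -> 0 <= m ->
  (forall i, (i < n)%nat -> 0 < v i) ->
  (forall i, (i < n)%nat -> T n d m v i <= beta * v i) ->
  (exists i, (i < n)%nat /\ x i <> 0) ->
  (forall i, (i < n)%nat -> T n d m x i = l * x i) ->
  l <= beta.
Proof.
  intros Hd Hm Hv HT [i1 [Hi1 Hx1]] Hx.
  destruct (argmax n (fun j => Rabs (x j)) v) as [i0 [Hi0 Hmax]]; [lia|auto|].
  simpl in Hmax.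
  assert (Hx0 : 0 < Rabs (x i0)).
  { destruct (Rle_lt_dec (Rabs (x i0)) 0); auto.
    pose proof (Hmax i1 Hi1). pose proof (Hv i1 Hi1). pose proof (Hv i0 Hi0).
    pose proof (Rabs_pos (x i0)). pose proof (Rabs_pos_lt _ Hx1). nra. }
  pose proof (Hv i0 Hi0) as Hv0.
  assert (HL : Rabs (Lf x i0) * v i0 <= Rabs (x i0) * Lf v i0).
  { unfold Lf. destruct i0. rewrite Rabs_R0; lra. apply Hmax; lia. }
  assert (HR : Rabs (Rf n x i0) * v i0 <= Rabs (x i0) * Rf n v i0).
  { unfold Rf. destruct (Nat.ltb_spec (S i0) n). apply Hmax; lia. rewrite Rabs_R0; lra. }
  assert (Habs : Rabs l * Rabs (x i0) <= d i0 * Rabs (x i0) + m * Rabs (Lf x i0) + m * Rabs (Rf n x i0)).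
  { rewrite <- Rabs_mult, <- Hx by auto. unfold T.
    pose proof (Hd i0 Hi0).
    pose proof (Rabs_triang (d i0 * x i0 + m * Lf x i0) (m * Rf n x i0)).
    pose proof (Rabs_triang (d i0 * x i0) (m * Lf x i0)).
    rewrite !Rabs_mult in *. rewrite (Rabs_right (d i0)) in * by lra. rewrite (Rabs_right m) in * by lra. lra. }
  specialize (HT i0 Hi0). unfold T in HT.
  assert (Rabs l * Rabs (x i0) * v i0 <= beta * Rabs (x i0) * v i0).
  { apply Rle_trans with ((d i0 * Rabs (x i0) + m * Rabs (Lf x i0) + m * Rabs (Rf n x i0)) * v i0).
    apply Rmult_le_compat_r; lra.
    pose proof (Hd i0 Hi0). nra. }
  assert (Rabs l <= beta).
  { apply Rmult_le_reg_r with (Rabs (x i0) * v i0). nra. nra. }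
  pose proof (Rle_abs l). lra.
Qed.

Lemma sym_lemma n d m u v :
  rsum n (fun i => u i * T n d m v i) = rsum n (fun i => v i * T n d m u i).
Proof.
  unfold T.
  transitivity (rsum n (fun i => u i * d i * v i) + m * rsum n (fun i => u i * Lf v i) + m * rsum n (fun i => u i * Rf n v i)).
  { rewrite <- !rsum_scal, <- !rsum_plus. apply rsum_ext; intros; ring. }
  transitivity (rsum n (fun i => u i * d i * v i) + m * rsum n (fun i => v i * Rf n u i) + m * rsum n (fun i => v i * Lf u i)).
  2:{ rewrite <- !rsum_scal, <- !rsum_plus. apply rsum_ext; intros; ring. }
  assert (forall a b, rsum n (fun i => a i * Lf b i) = rsum n (fun i => b i * Rf n a i)).
  { intros a b. destruct n as [|k]; [reflexivity|].
    rewrite rsum_shift. simpl rsum at 2. unfold Lf at 1. unfold Rf at 2.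
    rewrite Nat.ltb_irrefl.
    replace (rsum k (fun i => b i * Rf (S k) a i)) with (rsum k (fun i => a (S i) * b i)). simpl Lf. lra.
    apply rsum_ext; intros j Hj. unfold Rf. destruct (Nat.ltb_spec (S j) (S k)); [lra|lia]. }
  rewrite (H u v), (H v u). lra.
Qed.

Lemma strict_lemma n d m u v r beta i0 :
  (i0 < n)%nat ->
  (forall i, (i < n)%nat -> 0 < u i) -> (forall i, (i < n)%nat -> 0 < v i) ->
  (forall i, (i < n)%nat -> T n d m u i = r * u i) ->
  (forall i, (i < n)%nat -> T n d m v i <= beta * v i) ->
  T n d m v i0 < beta * v i0 -> r < beta.
Proof.
  intros Hi0 Hu Hv Heu Hle Hs.
  assert (A : rsum n (fun i => u i * T n d m v i) < rsum n (fun i => beta * (u i * v i))).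
  { apply (rsum_lt n _ _ i0 Hi0).
    - intros j Hj. specialize (Hle j Hj). specialize (Hu j Hj). nra.
    - specialize (Hu i0 Hi0). nra. }
  rewrite sym_lemma in A.
  replace (rsum n (fun i => v i * T n d m u i)) with (rsum n (fun i => r * (u i * v i))) in A.
  2:{ apply rsum_ext; intros j Hj. rewrite Heu by auto. ring. }
  rewrite !rsum_scal in A.
  assert (0 < rsum n (fun i => u i * v i)).
  { apply rsum_pos. lia. intros j Hj. specialize (Hu j Hj). specialize (Hv j Hj). nra. }
  nra.
Qed.

Fixpoint yv (d : nat -> R) (m l : R) (k : nat) : R :=
  match k with
  | O => 1
  | S k' => (l - d k') * yv d m l k' - m * m * (match k' with O => 0 | S k'' => yv d m l k'' end)
  end.

Definition ym1 d m l k := match k with O => 0 | S j => yv d m l j end.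

Lemma yv_S d m l k : yv d m l (S k) = (l - d k) * yv d m l k - m * m * ym1 d m l k.
Proof. reflexivity. Qed.

Lemma cont_id x0 : continuity_pt (fun l => l) x0.
Proof. apply derivable_continuous_pt. apply derivable_pt_id. Qed.

Lemma cont_const c x0 : continuity_pt (fun _ => c) x0.
Proof. apply continuity_pt_const. intros a b; reflexivity. Qed.

Lemma yv_cont d m k x0 : continuity_pt (fun l => yv d m l k) x0 /\ continuity_pt (fun l => ym1 d m l k) x0.
Proof.
  induction k.
  - split; [exact (cont_const 1 x0) | exact (cont_const 0 x0)].
  - destruct IHk as [H1 H2]. split; [|exact H1].
    simpl yv. fold (ym1 d m).
    apply (continuity_pt_minus (fun l => (l - d k) * yv d m l k) (fun l => m * m * ym1 d m l k)).
    + apply (continuity_pt_mult (fun l => l - d k) (fun l => yv d m l k)); auto.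
      apply (continuity_pt_minus (fun l => l) (fun _ => d k)). apply cont_id. apply cont_const.
    + apply (continuity_pt_mult (fun _ => m * m) (fun l => ym1 d m l k)); auto. apply cont_const.
Qed.

Lemma cont_sign f r : continuity_pt f r -> f r <> 0 ->
  exists delta, 0 < delta /\ forall z, Rabs (z - r) < delta -> 0 < f z * f r.
Proof.
  intros Hc Hne.
  destruct (Hc (Rabs (f r))) as [a [Ha H]]. apply Rabs_pos_lt; auto.
  exists a; split; auto. intros z Hz.
  destruct (Req_dec z r). subst. nra.
  assert (Hd : Rabs (f z - f r) < Rabs (f r)).
  { apply (H z). split. split. exact I. auto. exact Hz. }
  destruct (Rcase_abs (f r)); destruct (Rcase_abs (f z - f r)) ;
  rewrite ?Rabs_left in Hd by lra; rewrite ?Rabs_right in Hd by lra; try rewrite Rabs_left in Hd by lra; try rewrite Rabs_right in Hd by lra; nra.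
Qed.

Lemma yv_big d m k : 0 < m <= 1 -> (forall i, d i <= 2) ->
  0 < yv d m 4 k /\ 0 <= ym1 d m 4 k <= yv d m 4 k.
Proof.
  intros Hm Hd. induction k.
  - simpl. lra.
  - destruct IHk as [H1 [H2 H3]]. rewrite yv_S. simpl ym1. specialize (Hd k).
    assert (m * m <= 1) by nra. assert (0 <= (1 - m * m) * ym1 d m 4 k) by (apply Rmult_le_pos; lra).
    assert (m * m * ym1 d m 4 k <= yv d m 4 k) by nra.
    split; [nra|]. split; nra.
Qed.

Lemma no_double d m r : m <> 0 -> forall k, yv d m r k = 0 -> yv d m r (S k) = 0 -> False.
Proof.
  intros Hm k. induction k; intros H1 H2.
  - simpl in H1. lra.
  - rewrite yv_S in H2. rewrite H1 in H2. simpl ym1 in H2.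
    apply IHk; auto.
    assert (m * m <> 0) by (apply Rmult_integral_contrapositive; auto).
    apply (Rmult_eq_reg_l (m * m)); auto. lra.
Qed.

Lemma exists_top n d m : (1 <= n)%nat -> 0 < m <= 1 -> (forall i, d i <= 2) ->
  exists r, yv d m r n = 0 /\ forall k, (k < n)%nat -> 0 < yv d m r k.
Proof.
  intros Hn Hm Hd.
  set (P := fun l => forall k, (k <= n)%nat -> 0 < yv d m l k).
  set (E := fun z => P (- z)).
  assert (HE1 : bound E).
  { exists (- d O). intros z Hz. specialize (Hz 1%nat Hn). simpl in Hz. lra. }
  assert (HE2 : exists z, E z).
  { exists (-4). unfold E, P. intros k _. replace (- -4) with 4 by ring. apply yv_big; auto. }
  destruct (completeness E HE1 HE2) as [s [Hub Hlub]].
  set (r := - s).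
  assert (Ha : forall l, P l -> r <= l).
  { intros l Hl. assert (E (- l)) by (unfold E; rewrite Ropp_involutive; auto).
    specialize (Hub _ H). unfold r. lra. }
  assert (Hb : forall delta, 0 < delta -> exists l, P l /\ l < r + delta).
  { intros delta Hdel. apply NNPP. intros Hno.
    assert (is_upper_bound E (s - delta)).
    { intros z Hz. destruct (Rle_dec z (s - delta)); auto.
      exfalso. apply Hno. exists (- z). split. exact Hz. unfold r. lra. }
    specialize (Hlub _ H). lra. }
  assert (Hc : forall k, (k <= n)%nat -> 0 <= yv d m r k).
  { intros k Hk. destruct (Rle_dec 0 (yv d m r k)); auto. exfalso.
    destruct (cont_sign (fun l => yv d m l k) r) as [del [Hdel Hs]].
    apply yv_cont. lra.
    destruct (Hb del Hdel) as [l [Pl Hl]]. pose proof (Ha l Pl).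
    specialize (Hs l). simpl in Hs. assert (Rabs (l - r) < del) by (rewrite Rabs_right; lra).
    specialize (Hs H0). specialize (Pl k Hk). nra. }
  assert (Hd' : ~ P r).
  { intros Pr.
    assert (forall N, (N <= n)%nat -> exists del, 0 < del /\ forall z, Rabs (z - r) < del -> forall k, (k <= N)%nat -> 0 < yv d m z k).
    { induction N; intros HN.
      - exists 1. split; [lra|]. intros z _ k Hk. replace k with O by lia. simpl; lra.
      - destruct IHN as [d1 [Hd1 H1]]; [lia|].
        destruct (cont_sign (fun l => yv d m l (S N)) r) as [d2 [Hd2 H2]].
        apply yv_cont. specialize (Pr (S N) HN). lra.
        exists (Rmin d1 d2). split. apply Rmin_pos; auto.
        intros z Hz k Hk. destruct (Nat.eq_dec k (S N)).
        + subst. specialize (H2 z). cbv beta in H2. specialize (Pr (S N) HN).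
          assert (Rabs (z - r) < d2) by (pose proof (Rmin_r d1 d2); lra).
          specialize (H2 H). nra.
        + apply H1; [|lia]. pose proof (Rmin_l d1 d2); lra. }
    destruct (H n (le_n n)) as [del [Hdel Hz]].
    assert (P (r - del / 2)).
    { intros k Hk. apply Hz; auto. rewrite Rabs_left; lra. }
    specialize (Ha _ H0). lra. }
  assert (Hlt : forall k, (k < n)%nat -> yv d m r k = 0 -> False).
  { intros k Hk H0. destruct k as [|j]. simpl in H0; lra.
    pose proof (Hc (S (S j)) Hk). rewrite yv_S, H0 in H. simpl ym1 in H.
    pose proof (Hc j ltac:(lia)).
    assert (Hmm : 0 < m * m) by nra. assert (m * m * yv d m r j <= 0) by lra.
    assert (yv d m r j = 0). { destruct H1 as [Hp|He]; auto. exfalso. pose proof (Rmult_lt_0_compat _ _ Hmm Hp). lra. }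
    apply (no_double d m r ltac:(lra) j); auto. }
  exists r. split.
  - apply NNPP. intros Hne. apply Hd'. intros k Hk.
    destruct (Nat.eq_dec k n).
    + subst. destruct (Hc n Hk); auto. exfalso; auto.
    + destruct (Hc k Hk); auto. exfalso. apply (Hlt k); auto. lia.
  - intros k Hk. destruct (Hc k ltac:(lia)); auto. exfalso; apply (Hlt k); auto.
Qed.

Lemma eigvec n d m r : 0 < m -> yv d m r n = 0 -> (forall k, (k < n)%nat -> 0 < yv d m r k) ->
  let u := fun k => yv d m r k / m ^ k in
  (forall i, (i < n)%nat -> 0 < u i) /\ (forall i, (i < n)%nat -> T n d m u i = r * u i).
Proof.
  intros Hm Hn Hpos u. split.
  - intros i Hi. unfold u. apply Rdiv_lt_0_compat; auto. apply pow_lt; auto.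
  - intros i Hi. unfold T.
    assert (HR : Rf n u i = u (S i)).
    { unfold Rf. destruct (Nat.ltb_spec (S i) n); auto. replace (S i) with n by lia.
      unfold u. rewrite Hn. unfold Rdiv; ring. }
    rewrite HR.
    assert (Hmi : m ^ i <> 0) by (apply pow_nonzero; lra).
    assert (HL : m * Lf u i = m * m * ym1 d m r i / m ^ i).
    { destruct i as [|j]; simpl; unfold u; [field|]. field; repeat split; try apply pow_nonzero; lra. }
    rewrite HL. unfold u. rewrite yv_S. simpl pow. field; repeat split; try apply pow_nonzero; lra.
Qed.

Lemma sin_sum3 c t : sin (c - t) + sin (c + t) = 2 * cos t * sin c.
Proof. rewrite sin_minus, sin_plus. ring. Qed.

Lemma degp_bounds n i : 0 <= degp n i <= 2.
Proof. unfold degp, Lf, Rf. destruct i; destruct (Nat.ltb _ _); lra. Qed.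

Lemma degp_0 n : (1 < n)%nat -> degp n 0 = 1.
Proof. intros H. unfold degp, Lf, Rf. destruct (Nat.ltb_spec 1 n); [lra|lia]. Qed.

Lemma degp_int n i : (1 <= i)%nat -> (S i < n)%nat -> degp n i = 2.
Proof. intros H1 H2. unfold degp, Lf, Rf. destruct i; [lia|]. destruct (Nat.ltb_spec (S (S i)) n); [lra|lia]. Qed.

Lemma degp_last n i : (1 <= i)%nat -> (S i = n)%nat -> degp n i = 1.
Proof. intros H1 H2. unfold degp, Lf, Rf. destruct i; [lia|]. destruct (Nat.ltb_spec (S (S i)) n); [lia|lra]. Qed.

Lemma INR_pos k : (1 <= k)%nat -> 0 < INR k.
Proof. intros. apply lt_0_INR. lia. Qed.

Section V1.
Variable n : nat.
Hypothesis Hn : (3 <= n)%nat.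
Definition th := PI / INR (n + 1).
Definition v1 (i : nat) := sin (INR (S i) * th).


Lemma v1_pos i : (i < n)%nat -> 0 < v1 i.
Proof.
  intros Hi. unfold v1, th. pose proof PI_RGT_0.
  assert (0 < INR (n+1)) by (apply INR_pos; lia).
  assert (INR (S i) < INR (n + 1)) by (apply lt_INR; lia).
  assert (0 < INR (S i)) by (apply INR_pos; lia).
  apply sin_gt_0.
  - apply Rmult_lt_0_compat; auto. apply Rdiv_lt_0_compat; auto.
  - replace PI with (INR (n+1) * (PI / INR (n+1))) at 2 by (field; lra).
    apply Rmult_lt_compat_r; auto. apply Rdiv_lt_0_compat; auto.
Qed.

Lemma v1_LR i : (i < n)%nat -> Lf v1 i + Rf n v1 i = 2 * cos th * v1 i.
Proof.
  intros Hi.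
  assert (HL : Lf v1 i = sin (INR (S i) * th - th)).
  { unfold Lf, v1. destruct i. simpl. replace (1 * th - th) with 0 by ring. rewrite sin_0; auto.
    f_equal. rewrite (S_INR (S i)). ring. }
  assert (HR : Rf n v1 i = sin (INR (S i) * th + th)).
  { unfold Rf, v1. destruct (Nat.ltb_spec (S i) n).
    - f_equal. rewrite (S_INR (S i)). ring.
    - replace (INR (S i) * th + th) with PI. rewrite sin_PI; auto.
      unfold th. replace (n + 1)%nat with (S (S i)) by lia. rewrite (S_INR (S i)).
      assert (0 < INR (S i)) by (apply INR_pos; lia). field. lra. }
  rewrite HL, HR, sin_sum3. unfold v1. ring.
Qed.
End V1.

Section V2.
Variable n : nat.
Hypothesis Hn : (3 <= n)%nat.
Definition ph := PI / INR n / 2.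
Definition v2 (i : nat) := sin (INR (2 * i + 1) * ph).

Lemma v2_pos i : (i < n)%nat -> 0 < v2 i.
Proof.
  intros Hi. unfold v2, ph. pose proof PI_RGT_0.
  assert (INR (2 * i + 1) < 2 * INR n) by (replace (2 * INR n) with (INR (2 * n)) by (rewrite mult_INR; simpl; ring); apply lt_INR; lia).
  assert (0 < INR n) by (apply INR_pos; lia).
  assert (0 < INR (2 * i + 1)) by (apply INR_pos; lia).
  apply sin_gt_0.
  - apply Rmult_lt_0_compat; auto. apply Rdiv_lt_0_compat; auto. apply Rdiv_lt_0_compat; auto. lra.
  - replace PI with ((2 * INR n) * (PI / INR n / 2)) at 2 by (field; lra).
    apply Rmult_lt_compat_r; auto. apply Rdiv_lt_0_compat; [apply Rdiv_lt_0_compat|]; auto; lra.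
Qed.

Lemma v2_LR i : (i < n)%nat -> Lf v2 i + Rf n v2 i = 2 * cos (2 * ph) * v2 i + (2 - degp n i) * v2 i.
Proof.
  intros Hi.
  assert (Hc : forall a, sin ((2*a+1) * ph - 2 * ph) + sin ((2*a+1) * ph + 2 * ph) = 2 * cos (2*ph) * sin ((2*a+1)*ph)).
  { intros. apply sin_sum3. }
  assert (Hv : v2 i = sin ((2 * INR i + 1) * ph)).
  { unfold v2. f_equal. rewrite plus_INR, mult_INR. simpl. ring. }
  assert (Hn0 : 0 < INR n) by (apply INR_pos; lia).
  destruct i as [|j].
  - rewrite degp_0 by lia. unfold Lf, Rf. destruct (Nat.ltb_spec 1 n); [|lia].
    specialize (Hc 0). rewrite Hv. simpl INR in *.
    replace ((2 * 0 + 1) * ph - 2 * ph) with (- ph) in Hc by ring. rewrite sin_neg in Hc.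
    unfold v2. simpl INR. replace ((1+1+1) * ph) with ((2 * 0 + 1) * ph + 2 * ph) by ring.
    replace ((2 * 0 + 1) * ph) with ph in * by ring. lra.
  - unfold Lf, Rf.
    assert (HL : v2 j = sin ((2 * INR (S j) + 1) * ph - 2 * ph)).
    { unfold v2. f_equal. rewrite ?plus_INR, ?mult_INR, ?S_INR; simpl; ring. }
    rewrite HL. destruct (Nat.ltb_spec (S (S j)) n).
    + rewrite degp_int by lia.
      assert (HR : v2 (S (S j)) = sin ((2 * INR (S j) + 1) * ph + 2 * ph)).
      { unfold v2. f_equal. rewrite ?plus_INR, ?mult_INR, ?S_INR; simpl; ring. }
      rewrite HR, Hc, Hv. ring.
    + rewrite degp_last by lia. specialize (Hc (INR (S j))).
      assert (E1 : (2 * INR (S j) + 1) * ph + 2 * ph = PI + ph).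
      { unfold ph. replace n with (S (S j)) by lia. rewrite (S_INR (S j)). field.
        pose proof (INR_pos (S j) ltac:(lia)). lra. }
      assert (E2 : (2 * INR (S j) + 1) * ph = PI - ph).
      { unfold ph. replace n with (S (S j)) by lia. rewrite (S_INR (S j)). field.
        pose proof (INR_pos (S j) ltac:(lia)). lra. }
      rewrite E1 in Hc. rewrite Hv. rewrite E2 in *. replace (PI + ph) with (ph + PI) in Hc by ring. rewrite neg_sin in Hc. rewrite sin_PI_x in *. lra.
Qed.
End V2.

Definition eigT n d m l := exists x : nat -> R, (exists i, (i < n)%nat /\ x i <> 0) /\
  forall i, (i < n)%nat -> T n d m x i = l * x i.

Lemma finish n d m beta v :
  (1 <= n)%nat -> (forall i, (i < n)%nat -> 0 <= d i) -> 0 < m <= 1 -> (forall i, d i <= 2) ->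
  (forall i, (i < n)%nat -> 0 < v i) -> (forall i, (i < n)%nat -> T n d m v i <= beta * v i) ->
  exists r, eigT n d m r /\ (forall l, eigT n d m l -> l <= r) /\ r <= beta /\
    ((forall i, (i < n)%nat -> T n d m v i = beta * v i) -> r = beta) /\
    ((exists i0, (i0 < n)%nat /\ T n d m v i0 < beta * v i0) -> r < beta).
Proof.
  intros Hn Hd Hm Hd2 Hv Hle.
  destruct (exists_top n d m Hn Hm Hd2) as [r [Hr0 Hrp]].
  destruct (eigvec n d m r ltac:(lra) Hr0 Hrp) as [Hu Heu].
  set (u := fun k => yv d m r k / m ^ k) in *.
  assert (Hu' : forall i, (i < n)%nat -> 0 < u i) by exact Hu.
  assert (Heu' : forall i, (i < n)%nat -> T n d m u i = r * u i) by exact Heu.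
  clear Hu Heu. rename Hu' into Hu. rename Heu' into Heu.
  assert (Er : eigT n d m r).
  { exists u. split; auto. exists O. split; [lia|]. apply Rgt_not_eq. apply (Hu O). lia. }
  assert (Hall : forall l, eigT n d m l -> l <= r).
  { intros l [x [Hx Hex]]. apply (bound_lemma n d m u r l x); auto; try lra.
    intros i Hi. rewrite Heu; auto. lra. }
  exists r. split; auto. split; auto.
  assert (Hrb : r <= beta).
  { destruct Er as [x [Hx Hex]]. apply (bound_lemma n d m v beta r x); auto; lra. }
  split; auto. split.
  - intros Heq. apply Rle_antisym; auto. apply Hall. exists v. split; auto.
    exists O. split; [lia|]. specialize (Hv O ltac:(lia)). intro; lra.
  - intros [i0 [Hi0 Hs]]. apply (strict_lemma n d m u v r beta i0); auto.
Qed.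

Lemma eig_equiv n alpha l : eigenvalue n (A_alpha n alpha path_adj) l <->
  eigT n (fun i => alpha * degp n i) (1 - alpha) l.
Proof.
  unfold eigenvalue, eigT. split; intros [x [H1 H2]]; exists x; split; auto;
  intros i Hi; specialize (H2 i Hi); rewrite row_lemma in *; auto.
Qed.

Theorem corollary12 (n : nat) (alpha : R) :
  (3 <= n)%nat -> 0 <= alpha <= 1 ->
  let bound :=
    if Rlt_dec alpha (1/2)
    then 2 * alpha + 2 * (1 - alpha) * cos (PI / INR (n + 1))
    else 2 * alpha + 2 * (1 - alpha) * cos (PI / INR n) in
  exists r : R,
    is_rho n (A_alpha n alpha path_adj) r /\
    r <= bound /\
    (r = bound <-> (alpha = 0 \/ alpha = 1/2 \/ alpha = 1)).
Proof.
  intros Hn Ha. cbv zeta.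
  set (d := fun i => alpha * degp n i).
  assert (Hd0 : forall i, (i < n)%nat -> 0 <= d i).
  { intros i _. unfold d. pose proof (degp_bounds n i). nra. }
  assert (Hd2 : forall i, d i <= 2).
  { intros i. unfold d. pose proof (degp_bounds n i). nra. }
  assert (Hrho : forall r, eigT n d (1 - alpha) r -> (forall l, eigT n d (1 - alpha) l -> l <= r) ->
     is_rho n (A_alpha n alpha path_adj) r).
  { intros r H1 H2. split. apply eig_equiv; auto. intros l Hl. apply H2. apply eig_equiv; auto. }
  destruct (Req_dec alpha 1) as [H1|H1].
  -
    subst alpha. destruct (Rlt_dec 1 (1/2)); [lra|].
    exists 2. split; [|split].
    + apply Hrho.
      * exists (fun j => if Nat.eqb j 1 then 1 else 0). split.
        { exists 1%nat. split; [lia|]. simpl. lra. }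
        intros i Hi. unfold T, d. destruct (Nat.eqb_spec i 1).
        -- subst. rewrite degp_int by lia. lra.
        -- lra.
      * intros l Hl. destruct Hl as [x [Hx Hex]].
        apply (bound_lemma n d (1 - 1) (fun _ => 1) 2 l x);
          [exact Hd0 | lra | intros; lra | intros i Hi; unfold T; specialize (Hd2 i); lra | exact Hx | exact Hex].
    + lra.
    + split; intros; [auto|lra].
  - assert (Hm : 0 < 1 - alpha <= 1) by lra.
    destruct (Rlt_dec alpha (1/2)) as [Hlt|Hge].
    + destruct (finish n d (1 - alpha) (2 * alpha + 2 * (1 - alpha) * cos (PI / INR (n + 1))) (v1 n))
        as [r [Er [Hall [Hrb [Heq Hst]]]]]; auto; try lia.
      * apply v1_pos; auto.
      * intros i Hi. unfold T. pose proof (v1_LR n Hn i Hi) as HLR. pose proof (v1_pos n Hn i Hi).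
        pose proof (degp_bounds n i). unfold d. fold (th n).
        rewrite Rplus_assoc, <- Rmult_plus_distr_l.
        rewrite HLR. assert (0 <= alpha * ((2 - degp n i) * v1 n i)) by (apply Rmult_le_pos; [lra| apply Rmult_le_pos; lra]). nra.
      * exists r. split; [apply Hrho; auto|]. split; auto. split.
        -- intros Hr. left. destruct (Req_dec alpha 0); auto. exfalso.
           assert (r < 2 * alpha + 2 * (1 - alpha) * cos (PI / INR (n + 1))); [|lra].
           apply Hst. exists O. split; [lia|]. unfold T, d. pose proof (v1_LR n Hn O ltac:(lia)) as HLR.
           pose proof (v1_pos n Hn O ltac:(lia)). rewrite degp_0 by lia. fold (th n).
           rewrite Rplus_assoc, <- Rmult_plus_distr_l.
           rewrite HLR. nra.
        -- intros [H0|[H0|H0]]; try lra. apply Heq. intros i Hi. subst alpha.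
           unfold T, d. pose proof (v1_LR n Hn i Hi) as HLR. fold (th n).
           rewrite Rplus_assoc, <- Rmult_plus_distr_l.
           rewrite HLR. ring.
    + assert (Hph : PI / INR n = 2 * ph n).
      { unfold ph. field. apply not_0_INR. lia. }
      rewrite Hph.
      destruct (finish n d (1 - alpha) (2 * alpha + 2 * (1 - alpha) * cos (2 * ph n)) (v2 n))
        as [r [Er [Hall [Hrb [Heq Hst]]]]]; auto; try lia.
      * apply v2_pos; auto.
      * intros i Hi. unfold T. pose proof (v2_LR n Hn i Hi) as HLR. pose proof (v2_pos n Hn i Hi).
        pose proof (degp_bounds n i). unfold d.
        rewrite Rplus_assoc, <- Rmult_plus_distr_l.
        rewrite HLR. assert (0 <= (2 * alpha - 1) * (2 - degp n i) * v2 n i).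
        { apply Rmult_le_pos; [apply Rmult_le_pos|]; lra. }
        nra.
      * exists r. split; [apply Hrho; auto|]. split; auto. split.
        -- intros Hr. right. left. destruct (Req_dec alpha (1/2)); auto. exfalso.
           assert (r < 2 * alpha + 2 * (1 - alpha) * cos (2 * ph n)); [|lra].
           apply Hst. exists O. split; [lia|]. unfold T, d. pose proof (v2_LR n Hn O ltac:(lia)) as HLR.
           pose proof (v2_pos n Hn O ltac:(lia)). rewrite degp_0 in * by lia.
           rewrite Rplus_assoc, <- Rmult_plus_distr_l.
           rewrite HLR. assert (0 < (2 * alpha - 1) * v2 n 0) by (apply Rmult_lt_0_compat; lra). nra.
        -- intros [H0|[H0|H0]]; try lra. apply Heq. intros i Hi. subst alpha.
           unfold T, d. pose proof (v2_LR n Hn i Hi) as HLR.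
           rewrite Rplus_assoc, <- Rmult_plus_distr_l.
           rewrite HLR. field.
Qed.
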